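(* Let $C\subseteq\mathbb{R}^n$ be a nonempty closed convex set and $D\subseteq\mathbb{R}^n$ a nonempty compact set. Given $x^0\in\mathbb{R}^n$ and $\gamma\in(0,\frac1{12})$, consider the iteration \[ y^{t+1}=\frac{\gamma P_C\!\left(\frac{x^t}{1+5\gamma}\right)+x^t}{6\gamma+1},\qquad z^{t+1}\in P_D\!\left(\frac{2y^{t+1}-x^t}{1-5\gamma}\right),\qquad x^{t+1}=x^t+2(z^{t+1}-y^{t+1}). \] Then $\{(y^t,z^t,x^t)\}$ is bounded, and every cluster point $(\bar y,\bar z,\bar x)$ satisfies $\bar y=\bar z$ and $0\in\nabla F(\bar z)+\partial\delta_D(\bar z)$, where $F=\frac12 d_C^2$; i.e., $\bar z$ is a stationary point of $\min_u \frac12 d_C^2(u)+\delta_D(u)$.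
   Context: $d_C$ is the Euclidean distance to $C$, $P_C$ the projection onto $C$, $P_D(x)$ the (possibly multivalued) set of points of $D$ nearest to $x$ (any element may be chosen), and $\delta_D$ the indicator function of $D$ ($0$ on $D$, $+\infty$ outside). $\partial\delta_D$ is the limiting subdifferential: $v\in\partial h(x)$ iff there exist $x^t\to x$ with $h(x^t)\to h(x)$ and $v^t\to v$ such that $\liminf_{z\to x^t, z\ne x^t}\frac{h(z)-h(x^t)-\langle v^t,z-x^t\rangle}{\|z-x^t\|}\ge0$ for each $t$. *)

(* Defs.v *)
From mathcomp Require Import ssreflect ssrfun ssrbool eqtype ssrnat seq fintype bigop.
From Stdlib Require Import Reals ClassicalEpsilon.
Open Scope R_scope.

Definition vec (n : nat) := 'I_n -> R.

Section Vec.
Context {n : nat}.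
Implicit Types x y u v : vec n.

Definition vadd x y : vec n := fun i => x i + y i.
Definition vsub x y : vec n := fun i => x i - y i.
Definition vscale (a : R) x : vec n := fun i => a * x i.
Definition vdot x y : R := \big[Rplus/R0]_(i < n) (x i * y i).
Definition vnorm x : R := sqrt (vdot x x).
Definition vdist x y : R := vnorm (vsub x y).

Definition vconv (u : nat -> vec n) (l : vec n) : Prop :=
  Un_cv (fun k => vdist (u k) l) 0.

Definition vbounded (u : nat -> vec n) : Prop :=
  exists M, forall k, vnorm (u k) <= M.

Definition is_closed (C : vec n -> Prop) : Prop :=
  forall (u : nat -> vec n) l, (forall k, C (u k)) -> vconv u l -> C l.

Definition is_convex (C : vec n -> Prop) : Prop :=
  forall a b lam, C a -> C b -> 0 <= lam <= 1 ->
    C (vadd (vscale lam a) (vscale (1 - lam) b)).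

Definition is_compact (D : vec n -> Prop) : Prop :=
  forall u : nat -> vec n, (forall k, D (u k)) ->
    exists (phi : nat -> nat) l,
      (forall k, (phi k < phi (S k))%nat) /\ D l /\ vconv (fun k => u (phi k)) l.

Definition nonempty (C : vec n -> Prop) : Prop := exists c, C c.

Definition nearest (S : vec n -> Prop) x p : Prop :=
  S p /\ forall c, S c -> vdist x p <= vdist x c.

(* the projection P_C (a chosen nearest point; unique for C nonempty closed convex) *)
Definition proj (C : vec n -> Prop) x : vec n :=
  epsilon (inhabits (fun _ => R0)) (nearest C x).

Definition is_inf_dist (C : vec n -> Prop) x (r : R) : Prop :=
  (forall c, C c -> r <= vdist x c) /\
  (forall s, (forall c, C c -> s <= vdist x c) -> s <= r).

Definition dist_set (C : vec n -> Prop) x : R :=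
  epsilon (inhabits R0) (is_inf_dist C x).

Definition has_gradient (f : vec n -> R) x (g : vec n) : Prop :=
  forall eps, 0 < eps -> exists del, 0 < del /\
    forall u, 0 < vdist u x < del ->
      Rabs (f u - f x - vdot g (vsub u x)) <= eps * vdist u x.

(* Frechet (regular) subgradient condition for the indicator delta_D at a point
   xt of D:  liminf_{z -> xt, z <> xt} (delta_D z - delta_D xt - <v, z - xt>)/|z - xt| >= 0.
   Points z outside D contribute +infinity, so only z in D matter. *)
Definition regular_subgrad_ind (D : vec n -> Prop) xt v : Prop :=
  forall eps, 0 < eps -> exists del, 0 < del /\
    forall z, D z -> 0 < vdist z xt < del ->
      - vdot v (vsub z xt) / vdist z xt >= - eps.

(* limiting subdifferential of delta_D at x: v \in partial delta_D(x)
   iff x in D and there are x^t -> x with delta_D(x^t) -> delta_D(x) = 0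
   (i.e. x^t in D) and v^t -> v with v^t a regular subgradient at x^t. *)
Definition lim_subdiff_ind (D : vec n -> Prop) x v : Prop :=
  D x /\ exists (xs vs : nat -> vec n),
    (forall t, D (xs t)) /\ vconv xs x /\ vconv vs v /\
    (forall t, regular_subgrad_ind D (xs t) (vs t)).

End Vec.

(* Main.v *)
Require Import Defs.
From mathcomp Require Import ssreflect ssrfun ssrbool eqtype ssrnat seq fintype bigop.
From Stdlib Require Import Reals ClassicalEpsilon.
From Stdlib Require Import Classical Lra Lia FunctionalExtensionality.
Open Scope R_scope.

Section Sums.
Context {n : nat}.
Implicit Types f g : 'I_n -> R.

Lemma sum_plus f g : \big[Rplus/R0]_(i < n) f i + \big[Rplus/R0]_(i < n) g i = \big[Rplus/R0]_(i < n) (f i + g i).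
Proof. apply: (big_rec3 (fun a b c => a + b = c)); first (change R0 with 0; lra). move=> i a b c _ <-; lra. Qed.
Lemma sum_minus f g : \big[Rplus/R0]_(i < n) f i - \big[Rplus/R0]_(i < n) g i = \big[Rplus/R0]_(i < n) (f i - g i).
Proof. apply: (big_rec3 (fun a b c => a - b = c)); first (change R0 with 0; lra). move=> i a b c _ <-; lra. Qed.
Lemma sum_scal c f : c * \big[Rplus/R0]_(i < n) f i = \big[Rplus/R0]_(i < n) (c * f i).
Proof. apply: (big_rec2 (fun a b => c * a = b)); first (change R0 with 0; ring). move=> i a b _ <-; ring. Qed.
Lemma sum_scalr c f : \big[Rplus/R0]_(i < n) f i * c = \big[Rplus/R0]_(i < n) (f i * c).
Proof. apply: (big_rec2 (fun a b => a * c = b)); first (change R0 with 0; ring). move=> i a b _ <-; ring. Qed.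
Lemma sum_opp f : Ropp (\big[Rplus/R0]_(i < n) f i ) = \big[Rplus/R0]_(i < n) (- f i).
Proof. apply: (big_rec2 (fun a b => Ropp a = b)); first (change R0 with 0; ring). move=> i a b _ <-; ring. Qed.
Lemma sum_le f g : (forall i, f i <= g i) -> \big[Rplus/R0]_(i < n) f i <= \big[Rplus/R0]_(i < n) g i.
Proof. move=> H; apply: (big_rec2 (fun a b => a <= b)); first (change R0 with 0; lra). move=> i a b _ h; have := H i; lra. Qed.
Lemma sum_ge0 f : (forall i, 0 <= f i) -> 0 <= \big[Rplus/R0]_(i < n) f i.
Proof. move=> H; apply: (big_rec (fun a => 0 <= a)); first (change R0 with 0; lra). move=> i a _ h; have := H i; lra. Qed.
Lemma sum_comp f j : (forall i, 0 <= f i) -> f j <= \big[Rplus/R0]_(i < n) f i.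
Proof.
move=> H; have : j \in index_enum 'I_n by rewrite mem_index_enum.
elim: (index_enum _) => [|k r IH] //; rewrite big_cons in_cons => /orP [/eqP ->|/IH].
- rewrite -{1}(Rplus_0_r (f k)); apply: Rplus_le_compat_l.
  apply: (big_rec (fun a => 0 <= a)); first (change R0 with 0; lra). move=> i a _ h; have := H i; lra.
- move=> hh; have := Rplus_le_compat _ _ _ _ (H k) hh; by rewrite Rplus_0_l.
Qed.
Lemma sum_cv (a : 'I_n -> nat -> R) : (forall i, Un_cv (a i) 0) ->
  Un_cv (fun k => \big[Rplus/R0]_(i < n) a i k) 0.
Proof.
move=> H; elim: (index_enum _) => [|j r IH].
- move=> e he; exists 0%nat => k _; rewrite big_nil /R_dist; change R0 with 0; rewrite Rminus_0_r Rabs_R0; lra.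
- have := CV_plus _ _ _ _ (H j) IH. rewrite Rplus_0_r.
  move=> h e he; case: (h e he) => N hN; exists N => k hk; rewrite big_cons; exact: hN.
Qed.
End Sums.

Ltac merge := repeat progress rewrite ?sum_scal ?sum_scalr ?sum_opp ?sum_plus ?sum_minus.

Section VecB.
Context {n : nat}.
Implicit Types a b c : vec n.
Definition nsq a := vdot a a.

Ltac vring := unfold nsq, vdot, vadd, vsub, vscale; merge; apply: eq_bigr => i _; first [ring | field].

Lemma nsq_ge0 a : 0 <= nsq a.
Proof. apply: sum_ge0 => i; apply: Rle_0_sqr. Qed.

Lemma nsq0 a : nsq a = 0 -> a = (fun _ => 0).
Proof.
move=> h; apply: functional_extensionality => i.
have := sum_comp (fun i => a i * a i) i (fun i => Rle_0_sqr (a i)).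
rewrite -/(vdot a a) -/(nsq a) h => hi.
have := Rle_0_sqr (a i). rewrite /Rsqr => h2.
have : a i * a i = 0 by lra. by move/Rmult_integral => [].
Qed.

Lemma vnorm_ge0 a : 0 <= vnorm a.
Proof. exact: sqrt_pos. Qed.
Lemma vnorm_sq a : vnorm a * vnorm a = nsq a.
Proof. rewrite /vnorm sqrt_sqrt //; exact: nsq_ge0. Qed.

Lemma vdot_sym a b : vdot a b = vdot b a.
Proof. vring. Qed.

Lemma vdot0 b : vdot (fun _ => 0) b = 0.
Proof. rewrite /vdot; apply: (big_rec (fun x => x = 0)); first by []. move=> i x _ ->; ring. Qed.

Lemma CS a b : vdot a b <= vnorm a * vnorm b.
Proof.
have ha := vnorm_ge0 a; have hb := vnorm_ge0 b.
case: (Req_dec (vnorm a) 0) => [h0|ha0].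
  have : nsq a = 0 by rewrite -vnorm_sq h0; ring.
  move/nsq0 => e; rewrite h0 e vdot0; lra.
case: (Req_dec (vnorm b) 0) => [h0|hb0].
  have : nsq b = 0 by rewrite -vnorm_sq h0; ring.
  move/nsq0 => e; rewrite h0 e vdot_sym vdot0; lra.
have := nsq_ge0 (vsub (vscale (vnorm b) a) (vscale (vnorm a) b)).
have -> : nsq (vsub (vscale (vnorm b) a) (vscale (vnorm a) b)) =
   vnorm b * vnorm b * nsq a - 2 * (vnorm a * vnorm b) * vdot a b + vnorm a * vnorm a * nsq b by vring.
rewrite -!vnorm_sq => h.
have hp : 0 < vnorm a * vnorm b by apply: Rmult_lt_0_compat; lra.
have : 0 <= (vnorm a * vnorm b) * (2 * (vnorm a * vnorm b - vdot a b)) by nra.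
move=> h2; have := Rmult_le_reg_l _ 0 _ hp; nra.
Qed.

Lemma nsq_add a b : nsq (vadd a b) = nsq a + 2 * vdot a b + nsq b.
Proof. vring. Qed.

Lemma vnorm_tri a b : vnorm (vadd a b) <= vnorm a + vnorm b.
Proof.
have h1 := vnorm_ge0 (vadd a b); have h2 := vnorm_ge0 a; have h3 := vnorm_ge0 b.
have := CS a b; have e := nsq_add a b; rewrite -!vnorm_sq in e.
move=> hc; apply: Rsqr_incr_0_var; rewrite /Rsqr; nra.
Qed.

Lemma vnorm_scale s a : vnorm (vscale s a) = Rabs s * vnorm a.
Proof.
rewrite /vnorm.
have -> : vdot (vscale s a) (vscale s a) = (s * s) * nsq a by vring.
rewrite sqrt_mult; [|exact: Rle_0_sqr| exact: nsq_ge0].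
by rewrite -/(Rsqr s) sqrt_Rsqr_abs.
Qed.

Lemma vnorm_sub_sym a b : vnorm (vsub a b) = vnorm (vsub b a).
Proof. rewrite /vnorm; congr sqrt; vring. Qed.

Lemma vdist_tri a b c : vdist a c <= vdist a b + vdist b c.
Proof.
rewrite /vdist; have -> : vsub a c = vadd (vsub a b) (vsub b c).
  by apply: functional_extensionality => i; rewrite /vsub /vadd; ring.
exact: vnorm_tri.
Qed.

Lemma vnorm_sub_le a b : vnorm a <= vnorm b + vnorm (vsub a b).
Proof.
have -> : a = vadd b (vsub a b) by apply: functional_extensionality => i; rewrite /vsub /vadd; ring.
have := vnorm_tri b (vsub (vadd b (vsub a b)) b).
have -> : vsub (vadd b (vsub a b)) b = vsub a b by apply: functional_extensionality => i; rewrite /vsub /vadd; ring.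
by [].
Qed.
End VecB.
Ltac vring := unfold nsq, vdot, vadd, vsub, vscale; merge; apply: eq_bigr => i _; first [ring | field].


Ltac vfield := unfold nsq, vdot, vadd, vsub, vscale; merge; apply: eq_bigr => i _; field.

Lemma sqrt_cv0 (u : nat -> R) : (forall k, 0 <= u k) -> Un_cv u 0 -> Un_cv (fun k => sqrt (u k)) 0.
Proof.
move=> h0 hu e he. case: (hu (e*e)) => [|N hN]; first nra.
exists N => k hk. have := hN k hk. rewrite /R_dist !Rminus_0_r => h1.
rewrite Rabs_right; last (apply: Rle_ge; exact: sqrt_pos).
rewrite Rabs_right in h1; last (apply: Rle_ge; exact: h0).
rewrite -(sqrt_square e); last lra. apply: sqrt_lt_1_alt. split; [exact: h0|lra].
Qed.

Definition ee (k : nat) := / (INR k + 1).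
Lemma ee_pos k : 0 < ee k.
Proof. rewrite /ee; apply: Rinv_0_lt_compat; have := pos_INR k; lra. Qed.

Lemma inv_small e : 0 < e -> exists N, forall k, (N <= k)%coq_nat -> ee k < e.
Proof.
move=> he; case: (INR_archimed e 1 he) => N hN; exists N => k hk.
have hk' : INR N <= INR k by apply: le_INR.
have hpos : 0 < INR k + 1 by have := pos_INR k; lra.
rewrite /ee; apply: (Rmult_lt_reg_l (INR k + 1)) => //. rewrite Rinv_r; nra.
Qed.

Lemma ee_cv : Un_cv ee 0.
Proof.
move=> e he; case: (inv_small e he) => N hN; exists N => k hk.
have := hN k hk; have := ee_pos k; rewrite /R_dist Rminus_0_r; split_Rabs; lra.
Qed.

Lemma le_lim a b (s : nat -> R) : (forall k, a <= b + s k) -> Un_cv s 0 -> a <= b.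
Proof.
move=> h hs; apply: Rnot_lt_le => hab.
case: (hs (a - b)) => [|N hN]; first lra.
have := hN N (le_n N); have := h N; rewrite /R_dist Rminus_0_r; split_Rabs; lra.
Qed.

Section Proj.
Context {n : nat}.
Variable C : vec n -> Prop.
Hypotheses (HCne : nonempty C) (HCcl : is_closed C) (HCcv : is_convex C).

Lemma proj_exists x : exists p, nearest C x p.
Proof.
pose E (r : R) := exists c, C c /\ r = Ropp (nsq (vsub x c)).
have hb : bound E.
  exists 0 => r [c [_ ->]]. have := nsq_ge0 (vsub x c); lra.
have he : exists r, E r.
  case: HCne => c hc; by exists (- nsq (vsub x c)), c.
case: (completeness E hb he) => M [hub hlub].
have hM0 : M <= 0.
  apply: hlub => r [c [_ ->]]; have := nsq_ge0 (vsub x c); lra.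
have hlow : forall c, C c -> - M <= nsq (vsub x c).
  move=> c hc; have := hub (- nsq (vsub x c)) (ex_intro _ c (conj hc erefl)); lra.
have happ : forall e, 0 < e -> exists c, C c /\ nsq (vsub x c) < - M + e.
  move=> e hep; apply: NNPP => hn.
  have : M <= M - e.
    apply: hlub => r [c [hc ->]].
    have : ~ (nsq (vsub x c) < - M + e) by move=> h; apply: hn; exists c.
    lra.
  lra.
pose cs k := epsilon (inhabits x) (fun c => C c /\ nsq (vsub x c) < - M + ee k * ee k).
have hcs k : C (cs k) /\ nsq (vsub x (cs k)) < - M + ee k * ee k.
  have hk : 0 < ee k * ee k by have := ee_pos k; nra.
  exact: (epsilon_spec (inhabits x) (fun c => C c /\ nsq (vsub x c) < - M + ee k * ee k) (happ _ hk)).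
have hcau k j : nsq (vsub (cs k) (cs j)) <= 2 * (ee k * ee k) + 2 * (ee j * ee j).
  have hmid : C (vadd (vscale (/2) (cs k)) (vscale (1 - /2) (cs j))).
    apply: HCcv; [exact: (hcs k).1 | exact: (hcs j).1 | lra].
  have h1 := hlow _ hmid. case: (hcs k) => _ h2; case: (hcs j) => _ h3.
  have -> : nsq (vsub (cs k) (cs j)) = 2 * nsq (vsub x (cs k)) + 2 * nsq (vsub x (cs j)) - 4 * nsq (vsub x (vadd (vscale (/2) (cs k)) (vscale (1 - /2) (cs j)))) by vfield.
  lra.
have hcc i : Cauchy_crit (fun k => cs k i).
  move=> eps heps. case: (inv_small (eps/2)) => [|N hN]; first lra.
  exists N => k j hk hj. rewrite /R_dist.
  have h1 := hN k hk; have h2 := hN j hj.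
  have hc := hcau k j.
  have hcomp : (cs k i - cs j i) * (cs k i - cs j i) <= nsq (vsub (cs k) (cs j)).
    exact: (sum_comp (fun i0 => vsub (cs k) (cs j) i0 * vsub (cs k) (cs j) i0) i (fun i0 => Rle_0_sqr _)).
  have hk0 := ee_pos k; have hj0 := ee_pos j.
  have hsq : (cs k i - cs j i) * (cs k i - cs j i) < eps * eps by nra.
  split_Rabs; nra.
pose l : vec n := fun i => proj1_sig (R_complete _ (hcc i)).
have hl i : Un_cv (fun k => cs k i) (l i) := proj2_sig (R_complete _ (hcc i)).
have hconv : vconv cs l.
  rewrite /vconv /vdist /vnorm. apply: sqrt_cv0 => [k|]; first exact: nsq_ge0.
  apply: (sum_cv (fun i k => vsub (cs k) l i * vsub (cs k) l i)) => i.
  have hc : Un_cv (fun _ : nat => l i) (l i).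
    move=> e0 he0; exists 0%nat => k _; rewrite /R_dist Rminus_diag_eq // Rabs_R0; lra.
  have hd := CV_minus _ _ _ _ (hl i) hc.
  have := CV_mult _ _ _ _ hd hd.
  have -> : (l i - l i) * (l i - l i) = 0 by ring.
  by rewrite /vsub.
have hCl : C l := HCcl cs l (fun k => (hcs k).1) hconv.
have hfin : vnorm (vsub x l) <= sqrt (- M).
  apply: (le_lim _ _ (fun k => ee k + vdist (cs k) l)); last first.
    have := CV_plus _ _ _ _ ee_cv hconv; by rewrite Rplus_0_r.
  move=> k. have ht := vdist_tri x (cs k) l.
  have hs : vdist x (cs k) <= sqrt (- M) + ee k.
    have hk0 := ee_pos k. case: (hcs k) => _ h2.
    apply: Rsqr_incr_0_var; last (have := sqrt_pos (- M); lra).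
    rewrite /Rsqr /vdist /vnorm sqrt_sqrt; last exact: nsq_ge0.
    have := sqrt_sqrt (- M) ltac:(lra); have := sqrt_pos (- M); rewrite -/(nsq _) => hs0 hss. have := Rmult_le_pos _ _ hs0 (Rlt_le _ _ hk0). have -> : (sqrt (- M) + ee k) * (sqrt (- M) + ee k) = sqrt (- M) * sqrt (- M) + 2 * (sqrt (- M) * ee k) + ee k * ee k by ring. lra.
  rewrite /vdist in ht hs *; lra.
exists l; split => // c hc.
apply: (Rle_trans _ _ _ hfin). apply: sqrt_le_1_alt. exact: hlow.
Qed.

Lemma proj_nearest (x : vec n) : nearest C x (proj C x).
Proof.
rewrite /proj. exact: (epsilon_spec (inhabits (fun _ => R0)) (nearest C x) (proj_exists x)).
Qed.

Lemma proj_in (x : vec n) : C (proj C x).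
Proof. exact: (proj_nearest x).1. Qed.

Lemma sq_of_dist (a b c : vec n) : vdist a b <= vdist a c -> nsq (vsub a b) <= nsq (vsub a c).
Proof. move=> h; apply: sqrt_le_0; [exact: nsq_ge0|exact: nsq_ge0|exact: h]. Qed.

Lemma proj_char (x c : vec n) : C c -> vdot (vsub x (proj C x)) (vsub c (proj C x)) <= 0.
Proof.
move=> hc. set p := proj C x. set v := vdot (vsub x p) (vsub c p).
set K := nsq (vsub c p). have hK : 0 <= K := nsq_ge0 _.
have key : forall s, 0 < s <= 1 -> 2 * s * v <= s * s * K.
  move=> s hs.
  have hq : C (vadd (vscale s c) (vscale (1 - s) p)).
    apply: HCcv; [exact: hc|exact: proj_in|lra].
  have := sq_of_dist _ _ _ ((proj_nearest x).2 _ hq).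
  have -> : nsq (vsub x (vadd (vscale s c) (vscale (1 - s) p))) = nsq (vsub x p) - 2 * s * v + s * s * K.
    rewrite /v /K; vring.
  rewrite -/p; lra.
apply: Rnot_lt_le => hv.
set s := v / (v + K).
have hs : 0 < s <= 1.
  have hvK : 0 < v + K by lra.
  rewrite /s; split; first by apply: Rdiv_lt_0_compat.
  apply: (Rmult_le_reg_r (v + K)) => //.
  rewrite /Rdiv Rmult_assoc Rinv_l; lra.
have h := key s hs.
have hsK : s * (v + K) = v by rewrite /s; field; lra.
have : 2 * v <= s * K.
  apply: (Rmult_le_reg_l s); first lra. nra.
nra.
Qed.

Lemma proj_uniq (x q : vec n) : C q -> (forall c, C c -> vdot (vsub x q) (vsub c q) <= 0) -> proj C x = q.
Proof.
move=> hq hchar. set p := proj C x.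
have h1 := hchar p (proj_in x). have h2 := proj_char x q hq. rewrite -/p in h2.
have e : nsq (vsub p q) = vdot (vsub x q) (vsub p q) + vdot (vsub x p) (vsub q p) by vring.
have hz : nsq (vsub p q) = 0 by have := nsq_ge0 (vsub p q); lra.
have := nsq0 _ hz => hf. apply: functional_extensionality => i.
have := f_equal (fun f => f i) hf. rewrite /vsub /=. lra.
Qed.

Lemma proj_firm (a b : vec n) : nsq (vsub (proj C a) (proj C b)) <= vdot (vsub a b) (vsub (proj C a) (proj C b)).
Proof.
have h1 := proj_char a (proj C b) (proj_in b).
have h2 := proj_char b (proj C a) (proj_in a).
have e : vdot (vsub a b) (vsub (proj C a) (proj C b)) - nsq (vsub (proj C a) (proj C b)) =
  - vdot (vsub a (proj C a)) (vsub (proj C b) (proj C a)) - vdot (vsub b (proj C b)) (vsub (proj C a) (proj C b)) by vring.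
lra.
Qed.

Lemma resid_nonexp (a b : vec n) : nsq (vsub (vsub a (proj C a)) (vsub b (proj C b))) <= nsq (vsub a b).
Proof.
have h := proj_firm a b. have h0 := nsq_ge0 (vsub (proj C a) (proj C b)).
have e : nsq (vsub (vsub a (proj C a)) (vsub b (proj C b))) = nsq (vsub a b) - 2 * vdot (vsub a b) (vsub (proj C a) (proj C b)) + nsq (vsub (proj C a) (proj C b)) by vring.
lra.
Qed.

Lemma proj_nonexp (a b : vec n) : vnorm (vsub (proj C a) (proj C b)) <= vnorm (vsub a b).
Proof.
have h := proj_firm a b. have hc := CS (vsub a b) (vsub (proj C a) (proj C b)).
rewrite -vnorm_sq in h.
have h1 := vnorm_ge0 (vsub (proj C a) (proj C b)); have h2 := vnorm_ge0 (vsub a b).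
case: (Req_dec (vnorm (vsub (proj C a) (proj C b))) 0) => [->|hn]; first lra.
nra.
Qed.

Lemma F_conv (a b : vec n) : / 2 * nsq (vsub a (proj C a)) - / 2 * nsq (vsub b (proj C b)) <= vdot (vsub a (proj C a)) (vsub a b).
Proof.
have h := proj_char a (proj C b) (proj_in b).
have h0 := nsq_ge0 (vsub (vsub b (proj C b)) (vsub a (proj C a))).
have e : / 2 * nsq (vsub b (proj C b)) - / 2 * nsq (vsub a (proj C a)) + vdot (vsub a (proj C a)) (vsub a b) =
   / 2 * nsq (vsub (vsub b (proj C b)) (vsub a (proj C a))) - vdot (vsub a (proj C a)) (vsub (proj C b) (proj C a)) by vring.
lra.
Qed.

Lemma dist_set_eq (x : vec n) : dist_set C x = vdist x (proj C x).
Proof.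
have hinf : is_inf_dist C x (vdist x (proj C x)).
  split; first exact: (proj_nearest x).2.
  move=> s hs; exact: hs _ (proj_in x).
have := epsilon_spec (inhabits R0) (is_inf_dist C x) (ex_intro _ _ hinf).
rewrite -/(dist_set C x) => [[h1 h2]].
have := h1 _ (proj_in x). have := h2 _ (proj_nearest x).2. lra.
Qed.
End Proj.



Lemma grad_F n (C : vec n -> Prop) (HCne : nonempty C) (HCcl : is_closed C) (HCcv : is_convex C) (x : vec n) :
  has_gradient (fun u => / 2 * (dist_set C u) ^ 2) x (vsub x (proj C x)).
Proof.
move=> eps heps; exists eps; split => // u [hd0 hd].
rewrite !(dist_set_eq C HCne HCcl HCcv) /vdist /vnorm !pow2_sqrt; try exact: nsq_ge0.
rewrite -!/(nsq _) -/(vnorm (vsub u x)).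
have f1 := F_conv C HCne HCcl HCcv x u.
have f2 := F_conv C HCne HCcl HCcv u x.
have fm := proj_firm C HCne HCcl HCcv u x.
have e1 : vdot (vsub x (proj C x)) (vsub x u) = - vdot (vsub x (proj C x)) (vsub u x) by vring.
have e2 : vdot (vsub u (proj C u)) (vsub u x) - vdot (vsub x (proj C x)) (vsub u x) =
   nsq (vsub u x) - vdot (vsub u x) (vsub (proj C u) (proj C x)) by vring.
have h0 := nsq_ge0 (vsub (proj C u) (proj C x)).
have hv := vnorm_sq (vsub u x). rewrite /vdist in hd0 hd.
have hv0 := vnorm_ge0 (vsub u x).
have hle : nsq (vsub u x) <= eps * vnorm (vsub u x) by nra.
rewrite Rabs_right; lra.
Qed.

Lemma reg_normal n (D : vec n -> Prop) (w z : vec n) (k : R) : 0 < k -> nearest D w z ->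
  regular_subgrad_ind D z (vscale k (vsub w z)).
Proof.
move=> hk [hz hn] eps heps; exists (2 * eps / k); split.
  apply: Rdiv_lt_0_compat; lra.
move=> c hc [hd0 hd].
have h1 := sq_of_dist _ _ _ (hn c hc).
have e : nsq (vsub w c) = nsq (vsub w z) - 2 * vdot (vsub w z) (vsub c z) + nsq (vsub c z) by vring.
have e2 : vdot (vscale k (vsub w z)) (vsub c z) = k * vdot (vsub w z) (vsub c z) by vring.
have hv := vnorm_sq (vsub c z). rewrite /vdist in hd0 hd.
have hkd : k * vnorm (vsub c z) < 2 * eps.
  have := Rmult_lt_compat_l k _ _ hk hd. rewrite /Rdiv -Rmult_assoc (Rmult_comm k (2 * eps)) Rmult_assoc Rinv_r; lra.
have hdot : vdot (vscale k (vsub w z)) (vsub c z) <= eps * vnorm (vsub c z) by nra.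
rewrite /vdist; apply: Rle_ge.
have -> : - vdot (vscale k (vsub w z)) (vsub c z) / vnorm (vsub c z) = - (vdot (vscale k (vsub w z)) (vsub c z) / vnorm (vsub c z)) by rewrite /Rdiv; ring.
apply: Ropp_le_contravar. apply: (Rmult_le_reg_r (vnorm (vsub c z))) => //.
rewrite /Rdiv Rmult_assoc Rinv_l; lra.
Qed.

Definition Phi {n} (C : vec n -> Prop) (g : R) (y z x : vec n) : R :=
  / 2 * nsq (vsub y (proj C y)) + 5 / 2 * nsq y - 5 / 2 * nsq z
  + vdot (vsub y x) (vsub y z) * / g + / (2 * g) * nsq (vsub y z).

Lemma descent n (C : vec n -> Prop) (HCne : nonempty C) (HCcl : is_closed C) (HCcv : is_convex C)
  (g : R) (hg : 0 < g < / 12) (Y Y' Z Z' X X' : vec n) :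
  (forall i, X i = Y i + g * (6 * Y i - proj C Y i)) ->
  (forall i, X' i = Y' i + g * (6 * Y' i - proj C Y' i)) ->
  (forall i, X' i = X i + 2 * (Z i - Y i)) ->
  nsq (vsub (fun i => / (1 - 5 * g) * (2 * Y' i - X' i)) Z') <=
  nsq (vsub (fun i => / (1 - 5 * g) * (2 * Y' i - X' i)) Z) ->
  Phi C g Y' Z' X' <= Phi C g Y Z X - (5 / 2 - 26 * g) * nsq (vsub Y' Y).
Proof.
move=> hX hX' hXX hz.
set w := (fun i => / (1 - 5 * g) * (2 * Y' i - X' i)) in hz *.
set h := vsub (vsub Y' (proj C Y')) (vsub Y (proj C Y)).
set d := vsub Y' Y.
have hg5 : 0 < 1 - 5 * g by lra.
have e : Phi C g Y' Z' X' - Phi C g Y Z X =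
  (/ 2 * nsq (vsub Y' (proj C Y')) - / 2 * nsq (vsub Y (proj C Y)) - vdot (vsub Y' (proj C Y')) d)
  + g / 2 * nsq (vadd (vscale 5 d) h) - 5 / 2 * nsq d
  + (1 - 5 * g) / (2 * g) * (nsq (vsub w Z') - nsq (vsub w Z)).
  rewrite /Phi /w /h /d. unfold nsq, vdot, vadd, vsub, vscale; rewrite /Rdiv; merge.
  apply: eq_bigr => i _.
  have hZ : Z i = Y i + (X' i - X i) / 2 by rewrite hXX; field.
  rewrite hZ hX hX'. field. lra.
have fc : / 2 * nsq (vsub Y' (proj C Y')) - / 2 * nsq (vsub Y (proj C Y)) <= vdot (vsub Y' (proj C Y')) d := F_conv C HCne HCcl HCcv Y' Y.
have rn : nsq h <= nsq d := resid_nonexp C HCne HCcl HCcv Y' Y.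
have eq2 : 50 * nsq d + 2 * nsq h - nsq (vadd (vscale 5 d) h) = nsq (vsub (vscale 5 d) h) by rewrite /d /h; vring.
have q0 := nsq_ge0 (vsub (vscale 5 d) h).
have hq : nsq (vadd (vscale 5 d) h) <= 52 * nsq d by lra.
have c1 : g / 2 * nsq (vadd (vscale 5 d) h) <= g / 2 * (52 * nsq d).
  apply: Rmult_le_compat_l => //; lra.
have c2 : (1 - 5 * g) / (2 * g) * (nsq (vsub w Z') - nsq (vsub w Z)) <= 0.
  have : 0 < (1 - 5 * g) / (2 * g) by apply: Rdiv_lt_0_compat; lra.
  nra.
nra.
Qed.



Lemma phi_ge (phi : nat -> nat) : (forall k, (phi k < phi (S k))%nat) -> forall k, (k <= phi k)%coq_nat.
Proof.
move=> H; elim=> [|k IH]; first lia.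
have := H k; move/ltP; lia.
Qed.

Lemma cv_sub (u : nat -> R) l (T : nat -> nat) : Un_cv u l -> (forall k, (k <= T k)%coq_nat) ->
  Un_cv (fun k => u (T k)) l.
Proof.
move=> hu hT e he; case: (hu e he) => N hN; exists N => k hk; apply: hN.
have := hT k; lia.
Qed.

Lemma squeeze0 (u v : nat -> R) : (forall k, 0 <= u k <= v k) -> Un_cv v 0 -> Un_cv u 0.
Proof.
move=> h hv e he; case: (hv e he) => N hN; exists N => k hk.
have := hN k hk; have := h k; rewrite /R_dist !Rminus_0_r; split_Rabs; lra.
Qed.

Lemma summable_cv0 (a : nat -> R) M : (forall k, 0 <= a k) -> (forall t, sum_f_R0 a t <= M) -> Un_cv a 0.
Proof.
move=> h0 hM.
have hg : Un_growing (sum_f_R0 a) by move=> t; rewrite tech5; have := h0 (S t); lra.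
have hb : has_ub (sum_f_R0 a) by exists M => r [i ->]; exact: hM.
have hc := CV_Cauchy _ (growing_cv _ hg hb).
move=> e he; case: (hc e he) => N hN; exists (S N) => k hk.
case: k hk => [|k] hk; first lia.
have := hN (S k) k ltac:(lia) ltac:(lia). rewrite tech5 /R_dist /Rdist Rminus_0_r.
have := h0 (S k). split_Rabs; lra.
Qed.

Lemma vconv_uniq n (u : nat -> vec n) l1 l2 : vconv u l1 -> vconv u l2 -> l1 = l2.
Proof.
move=> h1 h2.
have hle : vdist l1 l2 <= 0.
  apply: (le_lim _ _ (fun k => vdist (u k) l1 + vdist (u k) l2)); last first.
    have := CV_plus _ _ _ _ h1 h2; by rewrite Rplus_0_r.
  move=> k; have := vdist_tri l1 (u k) l2. rewrite /vdist (vnorm_sub_sym l1 (u k)); lra.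
have hz : nsq (vsub l1 l2) = 0.
  have := vnorm_sq (vsub l1 l2); have := vnorm_ge0 (vsub l1 l2); rewrite /vdist in hle; nra.
have := nsq0 _ hz => hf. apply: functional_extensionality => i.
have := f_equal (fun f => f i) hf. rewrite /vsub /=. lra.
Qed.

Lemma vnorm_sub_tri n (a b : vec n) : vnorm (vsub a b) <= vnorm a + vnorm b.
Proof.
have -> : vsub a b = vadd a (vscale (-1) b) by apply: functional_extensionality => i; rewrite /vsub /vadd /vscale; ring.
have := vnorm_tri a (vscale (-1) b). rewrite vnorm_scale Rabs_Ropp Rabs_R1. lra.
Qed.

Lemma vdot_lb n (a b : vec n) : - (nsq a + nsq b) / 2 <= vdot a b.
Proof.
have := nsq_ge0 (vadd a b). rewrite nsq_add. lra.
Qed.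

Lemma compact_bounded n (D : vec n -> Prop) : is_compact D -> exists M, forall d, D d -> vnorm d <= M.
Proof.
move=> hD; apply: NNPP => hn.
have hk : forall k : nat, exists d, D d /\ INR k < vnorm d.
  move=> k; apply: NNPP => hk; apply: hn; exists (INR k) => d hd.
  apply: Rnot_lt_le => h; apply: hk; by exists d.
pose u k := epsilon (inhabits (fun _ => R0)) (fun d => D d /\ INR k < vnorm d).
have hu k : D (u k) /\ INR k < vnorm (u k) := epsilon_spec (inhabits (fun _ => R0)) (fun d => D d /\ INR k < vnorm d) (hk k).
case: (hD u (fun k => (hu k).1)) => phi [l [hphi [_ hc]]].
case: (hc 1) => [|N hN]; first lra.
case: (INR_archimed 1 (vnorm l + 1)) => [|K hK]; first lra.
set k := Nat.max N K.
have := hN k ltac:(lia). rewrite /R_dist Rminus_0_r => h1.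
have := vnorm_sub_le (u (phi k)) l. rewrite /vdist in h1.
have := (hu (phi k)).2. have := vnorm_ge0 (vsub (u (phi k)) l).
have hpk : INR K <= INR (phi k) by apply: le_INR; have := phi_ge phi hphi k; lia.
rewrite Rabs_right in h1; last (apply: Rle_ge; exact: vnorm_ge0).
lra.
Qed.

Lemma cv_const (c : R) : Un_cv (fun _ => c) c.
Proof. move=> e he; exists 0%nat => k _; rewrite /R_dist Rminus_diag_eq // Rabs_R0; lra. Qed.

Lemma vdist_le0_eq n (l1 l2 : vec n) : vdist l1 l2 <= 0 -> l1 = l2.
Proof.
move=> hle.
have hz : nsq (vsub l1 l2) = 0.
  have := vnorm_sq (vsub l1 l2); have := vnorm_ge0 (vsub l1 l2); rewrite /vdist in hle; nra.
have := nsq0 _ hz => hf. apply: functional_extensionality => i.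
have := f_equal (fun f => f i) hf. rewrite /vsub /=. lra.
Qed.



Theorem mainTheorem11 (n : nat) (C D : vec n -> Prop)
  (HCne : nonempty C) (HCcl : is_closed C) (HCcv : is_convex C)
  (HDne : nonempty D) (HDco : is_compact D)
  (gamma : R) (Hg : 0 < gamma < /12)
  (x0 : vec n) (x y z : nat -> vec n)
  (Hx0 : x 0%nat = x0)
  (Hy : forall t, y (S t) =
     vscale (/ (6 * gamma + 1))
       (vadd (vscale gamma (proj C (vscale (/ (1 + 5 * gamma)) (x t)))) (x t)))
  (Hz : forall t, nearest D
     (vscale (/ (1 - 5 * gamma)) (vsub (vscale 2 (y (S t))) (x t))) (z (S t)))
  (Hx : forall t, x (S t) = vadd (x t) (vscale 2 (vsub (z (S t)) (y (S t))))) :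
  (vbounded y /\ vbounded z /\ vbounded x) /\
  forall (yb zb xb : vec n) (phi : nat -> nat),
    (forall k, (phi k < phi (S k))%nat) ->
    vconv (fun k => y (phi k)) yb ->
    vconv (fun k => z (phi k)) zb ->
    vconv (fun k => x (phi k)) xb ->
    yb = zb /\
    exists g : vec n,
      has_gradient (fun u => / 2 * (dist_set C u) ^ 2) zb g /\
      lim_subdiff_ind D zb (vscale (-1) g).
Proof.
have g0 : 0 < gamma by lra.
have g12 : gamma < / 12 by lra.
have g12' : 12 * gamma < 1.
  have := Rmult_lt_compat_l 12 _ _ ltac:(lra) g12. rewrite Rinv_r; lra.
set P := proj C.
set q := fun t => P (vscale (/ (1 + 5 * gamma)) (x t)).
case: (compact_bounded _ D HDco) => MD hMD.
have MD0 : 0 <= MD by case: HDne => d hd; have := hMD d hd; have := vnorm_ge0 d; lra.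
have hq t : vnorm (q t) <= vnorm (P (fun _ => 0)) + / (1 + 5 * gamma) * vnorm (x t).
  have := vnorm_sub_le (q t) (P (fun _ => 0)).
  have := proj_nonexp C HCne HCcl HCcv (vscale (/ (1 + 5 * gamma)) (x t)) (fun _ => 0).
  have -> : vsub (vscale (/ (1 + 5 * gamma)) (x t)) (fun _ => 0) = vscale (/ (1 + 5 * gamma)) (x t).
    by apply: functional_extensionality => i; rewrite /vsub; ring.
  rewrite vnorm_scale Rabs_right; last (apply: Rle_ge; apply: Rlt_le; apply: Rinv_0_lt_compat; lra).
  rewrite /q /P; lra.
set A := (1 - 6 * gamma) / (1 + 6 * gamma).
set B := 2 * gamma / (1 + 6 * gamma).
set Cc := / (1 + 5 * gamma).
have hA : 0 <= A by apply: Rle_mult_inv_pos; lra.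
have hB : 0 <= B by apply: Rle_mult_inv_pos; lra.
have hCc : 0 < Cc <= 1.
  split; first (apply: Rinv_0_lt_compat; lra).
  rewrite /Cc -Rinv_1; apply: Rinv_le_contravar; lra.
have hrho : A + B * Cc < 1.
  have -> : A + B * Cc = ((1 - 6 * gamma) * (1 + 5 * gamma) + 2 * gamma) / ((1 + 6 * gamma) * (1 + 5 * gamma)).
    rewrite /A /B /Cc; field; lra.
  apply: (Rmult_lt_reg_r ((1 + 6 * gamma) * (1 + 5 * gamma))); first nra.
  rewrite /Rdiv Rmult_assoc Rinv_l; nra.
set K := 2 * MD + B * vnorm (P (fun _ => 0)).
have hxs t : vnorm (x (S t)) <= (A + B * Cc) * vnorm (x t) + K.
  have -> : x (S t) = vadd (vadd (vscale (- A) (x t)) (vscale 2 (z (S t)))) (vscale (- B) (q t)).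
    apply: functional_extensionality => i; rewrite Hx Hy /A /B /q /Cc /P /vadd /vscale /vsub; cbv beta; field; lra.
  have h1 := vnorm_tri (vadd (vscale (- A) (x t)) (vscale 2 (z (S t)))) (vscale (- B) (q t)).
  have h2 := vnorm_tri (vscale (- A) (x t)) (vscale 2 (z (S t))).
  rewrite !vnorm_scale !Rabs_Ropp (Rabs_right A) ?(Rabs_right B) ?(Rabs_right 2) in h1 h2; try lra.
  have h3 := hMD _ (Hz t).1. have h4 := hq t. rewrite -/Cc in h4.
  have := Rmult_le_compat_l B _ _ hB h4. rewrite /K. move=> h5. have h6 : vnorm (vadd (vscale (- A) (x t)) (vscale 2 (z (S t)))) <= A * vnorm (x t) + 2 * MD by lra. have h7 : (A + B * Cc) * vnorm (x t) + (2 * MD + B * vnorm (P (fun=> 0))) = A * vnorm (x t) + 2 * MD + B * (vnorm (P (fun=> 0)) + Cc * vnorm (x t)) by ring. rewrite h7. lra.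
set rho := A + B * Cc.
have hrho1 : rho < 1 := hrho.
have hrho0 : 0 <= rho by rewrite /rho; have := Rmult_le_pos _ _ hB (Rlt_le _ _ hCc.1); lra.
have hK0 : 0 <= K by rewrite /K; have := vnorm_ge0 (P (fun _ => 0)); have := Rmult_le_pos _ _ hB (vnorm_ge0 (P (fun _ => 0))); lra.
set Kq := K / (1 - rho).
have hKq : 0 <= Kq by apply: Rle_mult_inv_pos; lra.
have hne : 1 - rho <> 0 by lra.
have eK : K = (1 - rho) * Kq by rewrite /Kq; field.
set MX := vnorm (x 0%nat) + Kq.
have hMX : forall t, vnorm (x t) <= MX.
  elim=> [|t IH]; first (rewrite /MX; lra).
  apply: (Rle_trans _ _ _ (hxs t)).
  have h1 := Rmult_le_compat_l rho _ _ hrho0 IH.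
  have h2 := Rmult_le_pos _ _ (Rlt_le _ _ (Rlt_Rminus _ _ hrho1)) (vnorm_ge0 (x 0%nat)).
  rewrite -/rho; rewrite /MX in h1 *. nra.
have hMX0 : 0 <= MX by have := hMX 0%nat; have := vnorm_ge0 (x 0%nat); lra.
set P0 := vnorm (P (fun _ => 0)).
have hP0 : 0 <= P0 := vnorm_ge0 _.
set MY0 := gamma * (P0 + MX) + MX.
have hys t : vnorm (y (S t)) <= MY0.
  rewrite Hy vnorm_scale Rabs_right; last (apply: Rle_ge; apply: Rlt_le; apply: Rinv_0_lt_compat; lra).
  have h1 := vnorm_tri (vscale gamma (P (vscale (/ (1 + 5 * gamma)) (x t)))) (x t).
  rewrite vnorm_scale Rabs_right in h1; last lra.
  have h2 := hq t. rewrite -/Cc -/P0 in h2. have h3 := hMX t.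
  have h4 : vnorm (q t) <= P0 + MX.
    have := Rmult_le_compat _ _ _ _ (Rlt_le _ _ hCc.1) (vnorm_ge0 (x t)) hCc.2 h3. lra.
  have h5 : vnorm (vadd (vscale gamma (P (vscale (/ (1 + 5 * gamma)) (x t)))) (x t)) <= MY0.
    have := Rmult_le_compat_l gamma _ _ (Rlt_le _ _ g0) h4. rewrite /MY0 /q in h1 *. lra.
  have hi : 0 < / (6 * gamma + 1) <= 1.
    split; first (apply: Rinv_0_lt_compat; lra). rewrite -Rinv_1; apply: Rinv_le_contravar; lra.
  have h6 := vnorm_ge0 (vadd (vscale gamma (P (vscale (/ (1 + 5 * gamma)) (x t)))) (x t)).
  have hMY0 : 0 <= MY0 by rewrite /MY0; nra.
  rewrite /P in h5 h6 *. nra.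
have hzs t : vnorm (z (S t)) <= MD := hMD _ (Hz t).1.
set MY := vnorm (y 0%nat) + MY0.
set MZ := vnorm (z 0%nat) + MD.
have hMY0 : 0 <= MY0 by have := hys 0%nat; have := vnorm_ge0 (y 1%nat); lra.
have hMY : forall t, vnorm (y t) <= MY.
  case=> [|t]; rewrite /MY; first lra. have := hys t; have := vnorm_ge0 (y 0%nat); lra.
have hMZ : forall t, vnorm (z t) <= MZ.
  case=> [|t]; rewrite /MZ; first lra. have := hzs t; have := vnorm_ge0 (z 0%nat); lra.
split; first (split; [exists MY | split; [exists MZ | exists MX]]; done).
have hPY t : P (y (S t)) = q t.
  rewrite /P; apply: (proj_uniq C HCne HCcl HCcv); first exact: proj_in.
  move=> c hc.
  have hch := proj_char C HCne HCcl HCcv (vscale (/ (1 + 5 * gamma)) (x t)) c hc.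
  have e : vdot (vsub (y (S t)) (q t)) (vsub c (q t)) = (1 + 5 * gamma) / (6 * gamma + 1) *
     vdot (vsub (vscale (/ (1 + 5 * gamma)) (x t)) (q t)) (vsub c (q t)).
    rewrite Hy /q /P. unfold vdot, vadd, vsub, vscale; rewrite /Rdiv; merge.
    apply: eq_bigr => i _; field; lra.
  rewrite e. have : 0 < (1 + 5 * gamma) / (6 * gamma + 1) by apply: Rdiv_lt_0_compat; lra.
  rewrite /q /P in hch *. nra.
have hXrel t i : x t i = y (S t) i + gamma * (6 * y (S t) i - proj C (y (S t)) i).
  rewrite -/P hPY Hy /q /P /vadd /vscale; cbv beta; field; lra.
have hXX t i : x (S t) i = x t i + 2 * (z (S t) i - y (S t) i).
  by rewrite Hx /vadd /vscale /vsub.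
have hzopt t : nsq (vsub (fun i => / (1 - 5 * gamma) * (2 * y (S (S t)) i - x (S t) i)) (z (S (S t)))) <=
   nsq (vsub (fun i => / (1 - 5 * gamma) * (2 * y (S (S t)) i - x (S t) i)) (z (S t))).
  exact: (sq_of_dist _ _ _ ((Hz (S t)).2 _ (Hz t).1)).
set Ph := fun t => Phi C gamma (y (S t)) (z (S t)) (x t).
set cc := 5 / 2 - 26 * gamma.
have hcc : 0 < cc by rewrite /cc; lra.
set a := fun t => nsq (vsub (y (S (S t))) (y (S t))).
have ha0 t : 0 <= a t by exact: nsq_ge0.
have hdesc t : Ph (S t) <= Ph t - cc * a t.
  have H := descent _ C HCne HCcl HCcv gamma Hg _ _ _ _ _ _ (hXrel t) (hXrel (S t)) (hXX t) (hzopt t). rewrite /Ph /cc /a /=. exact: H.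
have nsq_bd : forall (u v : vec n) Mu Mv, vnorm u <= Mu -> vnorm v <= Mv -> nsq (vsub u v) <= (Mu + Mv) * (Mu + Mv).
  move=> u v Mu Mv hu hv. rewrite -vnorm_sq. have := vnorm_sub_tri _ u v. have := vnorm_ge0 (vsub u v).
  have := vnorm_ge0 u; have := vnorm_ge0 v. nra.
set Bnd := 5 / 2 * (MZ * MZ) + / gamma * (((MY + MX) * (MY + MX) + (MY + MZ) * (MY + MZ)) / 2).
have hlow t : - Bnd <= Ph t.
  rewrite /Ph /Phi.
  have h1 := nsq_ge0 (vsub (y (S t)) (proj C (y (S t)))).
  have h2 := nsq_ge0 (y (S t)).
  have h3 := nsq_ge0 (vsub (y (S t)) (z (S t))).
  have h4 : nsq (z (S t)) <= MZ * MZ.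
    rewrite -vnorm_sq; have := hMZ (S t); have := vnorm_ge0 (z (S t)); nra.
  have h5 := vdot_lb _ (vsub (y (S t)) (x t)) (vsub (y (S t)) (z (S t))).
  have h6 := nsq_bd _ _ _ _ (hMY (S t)) (hMX t).
  have h7 := nsq_bd _ _ _ _ (hMY (S t)) (hMZ (S t)).
  have hig : 0 < / gamma by apply: Rinv_0_lt_compat.
  have hig2 : 0 < / (2 * gamma) by apply: Rinv_0_lt_compat; lra.
  have h8 : - (((MY + MX) * (MY + MX) + (MY + MZ) * (MY + MZ)) / 2) <= vdot (vsub (y (S t)) (x t)) (vsub (y (S t)) (z (S t))) by lra.
  have h9 := Rmult_le_compat_r (/ gamma) _ _ (Rlt_le _ _ hig) h8.
  have h10 := Rmult_le_pos _ _ (Rlt_le _ _ hig2) h3.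
  rewrite /Bnd. lra.
have htel t : cc * sum_f_R0 a t <= Ph 0%nat - Ph (S t).
  elim: t => [|t IH]; first (rewrite /=; have := hdesc 0%nat; lra).
  rewrite tech5; have := hdesc (S t); lra.
have hacv : Un_cv a 0.
  apply: (summable_cv0 _ ((Ph 0%nat + Bnd) / cc)) => // t.
  apply: (Rmult_le_reg_l cc) => //. have -> : cc * ((Ph 0%nat + Bnd) / cc) = Ph 0%nat + Bnd by field; lra.
  have := htel t; have := hlow (S t); lra.
set al := (1 + 5 * gamma) / 2.
set be := gamma / 2.
set b := fun t => nsq (vsub (z (S t)) (y (S t))).
have hb t : 0 <= b t <= (2 * (al * al) + 2 * (be * be)) * a t.
  split; first exact: nsq_ge0.
  set d := vsub (y (S (S t))) (y (S t)).
  set h := vsub (vsub (y (S (S t))) (proj C (y (S (S t))))) (vsub (y (S t)) (proj C (y (S t)))).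
  have -> : b t = nsq (vadd (vscale al d) (vscale be h)).
    rewrite /b; congr nsq; apply: functional_extensionality => i.
    rewrite /vadd /vsub /vscale /d /h /al /be. have := hXX t i. rewrite (hXrel t i) (hXrel (S t) i). cbv beta. move=> e. 
    have -> : z (S t) i = y (S t) i + (y (S (S t)) i + gamma * (6 * y (S (S t)) i - proj C (y (S (S t))) i) -
          (y (S t) i + gamma * (6 * y (S t) i - proj C (y (S t)) i))) / 2 by lra.
    rewrite /vsub; field.
  have e2 : 2 * (al * al) * nsq d + 2 * (be * be) * nsq h - nsq (vadd (vscale al d) (vscale be h)) = nsq (vsub (vscale al d) (vscale be h)) by rewrite /d /h; vring.
  have := nsq_ge0 (vsub (vscale al d) (vscale be h)).
  have rn : nsq h <= nsq d := resid_nonexp C HCne HCcl HCcv _ _.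
  have : a t = nsq d by [].
  have := Rmult_le_compat_l (2 * (be * be)) _ _ ltac:(nra) rn. nra.
have hbcv : Un_cv b 0.
  apply: (squeeze0 _ (fun t => (2 * (al * al) + 2 * (be * be)) * a t)) => //.
  have := CV_mult _ _ _ _ (cv_const (2 * (al * al) + 2 * (be * be))) hacv.
  by rewrite Rmult_0_r.
move=> yb zb xb phi hphi hyc hzc hxc.
have hpg := phi_ge phi hphi.
set T := fun k => Nat.pred (phi (S k)).
have eT k : phi (S k) = S (T k) by rewrite /T; have := hpg (S k); lia.
have hTge k : (k <= T k)%coq_nat by rewrite /T; have := hpg (S k); lia.
have hy1 : Un_cv (fun k => vdist (y (S (T k))) yb) 0.
  move=> e he; case: (hyc e he) => N hN; exists N => k hk; rewrite -eT; apply: hN; lia.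
have hz1 : Un_cv (fun k => vdist (z (S (T k))) zb) 0.
  move=> e he; case: (hzc e he) => N hN; exists N => k hk; rewrite -eT; apply: hN; lia.
have hbT : Un_cv (fun k => sqrt (b (T k))) 0.
  apply: sqrt_cv0 => [k|]; first exact: nsq_ge0.
  exact: (cv_sub _ _ _ hbcv hTge).
have edyz m : vdist (y (S m)) (z (S m)) = sqrt (b m) by rewrite /vdist vnorm_sub_sym.
have hyz : yb = zb.
  apply: vdist_le0_eq.
  apply: (le_lim _ _ (fun k => vdist (y (S (T k))) yb + sqrt (b (T k)) + vdist (z (S (T k))) zb)); last first.
    have := CV_plus _ _ _ _ (CV_plus _ _ _ _ hy1 hbT) hz1; by rewrite !Rplus_0_r.
  move=> k. have h1 := vdist_tri yb (y (S (T k))) zb.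
  have h2 := vdist_tri (y (S (T k))) (z (S (T k))) zb.
  rewrite edyz in h2. have e3 : vdist yb (y (S (T k))) = vdist (y (S (T k))) yb by rewrite /vdist vnorm_sub_sym. lra.
split => //.
exists (vsub zb (proj C zb)); split; first exact: (grad_F _ C HCne HCcl HCcv zb).
set xs := fun k => z (S (T k)).
have hxsD k : D (xs k) := (Hz (T k)).1.
split.
  case: (HDco xs hxsD) => psi [l [hpsi [hl hc]]].
  have hc2 : vconv (fun k => xs (psi k)) zb.
    exact: (cv_sub _ _ _ hz1 (phi_ge psi hpsi)).
  by rewrite -(vconv_uniq _ _ _ _ hc hc2).
set k5 := (1 - 5 * gamma) / gamma.
have hk5 : 0 < k5 by apply: Rdiv_lt_0_compat; lra.
set w := fun k => vscale (/ (1 - 5 * gamma)) (vsub (vscale 2 (y (S (T k)))) (x (T k))).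
exists xs, (fun k => vscale k5 (vsub (w k) (xs k))).
split => //; split => //; split; last first.
  move=> k; exact: (reg_normal _ D (w k) (xs k) k5 hk5 (Hz (T k))).
rewrite -hyz.
apply: (squeeze0 _ (fun k => k5 * sqrt (b (T k)) + vdist (y (S (T k))) yb)); last first.
  have := CV_plus _ _ _ _ (CV_mult _ _ _ _ (cv_const k5) hbT) hy1; by rewrite Rmult_0_r Rplus_0_r.
move=> k; split; first exact: vnorm_ge0.
rewrite /vdist. set Yk := y (S (T k)). set Zk := z (S (T k)).
have -> : vsub (vscale k5 (vsub (w k) (xs k))) (vscale (-1) (vsub yb (proj C yb))) =
   vadd (vscale k5 (vsub Yk Zk)) (vscale (-1) (vsub (vsub Yk (proj C Yk)) (vsub yb (proj C yb)))).
  apply: functional_extensionality => i.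
  rewrite /w /xs /Yk /Zk /vadd /vsub /vscale /k5 (hXrel (T k) i). field. lra.
have h1 := vnorm_tri (vscale k5 (vsub Yk Zk)) (vscale (-1) (vsub (vsub Yk (proj C Yk)) (vsub yb (proj C yb)))).
rewrite !vnorm_scale Rabs_Ropp Rabs_R1 Rabs_right in h1; last lra.
have h2 : vnorm (vsub Yk Zk) = sqrt (b (T k)) by exact: edyz.
have h3 : vnorm (vsub (vsub Yk (proj C Yk)) (vsub yb (proj C yb))) <= vdist Yk yb.
  apply: sqrt_le_1_alt; exact: resid_nonexp.
apply: (Rle_trans _ _ _ h1). rewrite h2 Rmult_1_l. apply: Rplus_le_compat_l. exact: h3.
Qed.
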